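(* Let $V$ be any vector space over a field $\mathbf{k}$ of characteristic zero. The assignment sending a twisted Poisson structure $\{\,,\}$ on $TV$ to the map $r\in\operatorname{End}(V\otimes V)$, $r(v\otimes w):=\{v,w\}$ for $v,w\in V$, is a bijection between twisted Poisson structures on $TV$ and elements $r\in\operatorname{End}(V\otimes V)$ that are skew, $r=-r^{21}$, and satisfy the classical Yang–Baxter equation $$[r^{12},r^{13}]-[r^{23},r^{12}]+[r^{13},r^{23}]=0\quad\text{in }\operatorname{End}(V^{\otimes 3}).$$
   Context: $TV=\bigoplus_{m\ge0}V^{\otimes m}$ is the tensor algebra with multiplication $\otimes$; for $x\in V^{\otimes m}$ write $|x|=m$, and $S_m$ acts on $V^{\otimes m}$ by permuting tensor factors. Block permutations: for $a,b,c\ge0$, $(21)^{a,b}$ is the linear map of $V^{\otimes(a+b)}$ with $x\otimes y\mapsto y\otimes x$ ($x\in V^{\otimes a},y\in V^{\otimes b}$); $(231)^{a,b,c}$, $(312)^{a,b,c}$, $(213)^{a,b,c}$ are the linear maps of $V^{\otimes(a+b+c)}$ with $x\otimes y\otimes z\mapsto z\otimes x\otimes y$, $x\otimes y\otimes z\mapsto y\otimes z\otimes x$, $x\otimes y\otimes z\mapsto y\otimes x\otimes z$ respectively ($x\in V^{\otimes a},y\in V^{\otimes b},z\in V^{\otimes c}$). A twisted Poisson structure on $TV$ is a bilinear map $\{\,,\}:TV\otimes TV\to TV$ with $\{V^{\otimes m},V^{\otimes n}\}\subset V^{\otimes(m+n)}$ such that for all homogeneous $u,v,w$: (skew-symmetry)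 $\{w,v\}=-(21)^{|v|,|w|}\{v,w\}$; (Jacobi) $\{u,\{v,w\}\}+(231)^{|v|,|w|,|u|}\{v,\{w,u\}\}+(312)^{|w|,|u|,|v|}\{w,\{u,v\}\}=0$; (Leibniz) $\{u\otimes v,w\}=u\otimes\{v,w\}+(213)^{|v|,|u|,|w|}(v\otimes\{u,w\})$. For $r\in\operatorname{End}(V\otimes V)$, $r^{ij}\in\operatorname{End}(V^{\otimes 3})$ denotes $r$ acting on the $i$-th and $j$-th tensor factors, and $r^{21}=PrP$ where $P(v\otimes w)=w\otimes v$. *)

(* Defs.v *)
(* The tensor algebra T(V) of a vector space V with basis B
   is modelled as the free vector space on words over B (the monoid algebra
   {malg k[seq B]}): the basis word [:: b1; ...; bm] stands for
   b1 (x) ... (x) bm, and V^{(x)m} is the span of the words of length m. *)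
From HB Require Import structures.
From mathcomp Require Import all_boot all_algebra.
From mathcomp Require Import finmap.
From mathcomp.multinomials Require Import monalg.

Set Implicit Arguments.
Unset Strict Implicit.
Unset Printing Implicit Defensive.

Import GRing.Theory.
Local Open Scope ring_scope.

Section TensorAlgebra.
Variables (k : fieldType) (B : choiceType).

Definition TV := {malg k[seq B]}.

Definition tw (w : seq B) : TV := << w >>.

Definition homog (m : nat) (x : TV) : Prop :=
  forall w, w \in msupp x -> size w = m.

Definition lin (f : seq B -> TV) (x : TV) : TV :=
  \sum_(w <- msupp x) x@_w *: f w.

Definition tens (x y : TV) : TV :=
  \sum_(a <- msupp x) \sum_(b <- msupp y) (x@_a * y@_b) *: tw (a ++ b).

(* block permutations; only ever applied to elements of the right degree *)
(* (21)^{a,b} : x(x)y |-> y(x)x, |x| = a, |y| = b *)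
Definition perm21 (a b : nat) : TV -> TV :=
  lin (fun w => tw (drop a w ++ take a w)).
(* (231)^{a,b,c} : x(x)y(x)z |-> z(x)x(x)y *)
Definition perm231 (a b c : nat) : TV -> TV :=
  lin (fun w => tw (drop (a + b) w ++ take (a + b) w)).
(* (312)^{a,b,c} : x(x)y(x)z |-> y(x)z(x)x *)
Definition perm312 (a b c : nat) : TV -> TV :=
  lin (fun w => tw (drop a w ++ take a w)).
(* (213)^{a,b,c} : x(x)y(x)z |-> y(x)x(x)z *)
Definition perm213 (a b c : nat) : TV -> TV :=
  lin (fun w => tw (take b (drop a w) ++ take a w ++ drop (a + b) w)).

Definition twisted_poisson (br : TV -> TV -> TV) : Prop :=
  (forall (c : k) x y z, br (c *: x + y) z = c *: br x z + br y z) /\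
      (forall (c : k) x y z, br z (c *: x + y) = c *: br z x + br z y) /\
      (forall m n x y, homog m x -> homog n y -> homog (m + n) (br x y)) /\
      (forall m n v w, homog m v -> homog n w ->
          br w v = - perm21 m n (br v w)) /\
      (forall p q s u v w, homog p u -> homog q v -> homog s w ->
          br u (br v w) + perm231 q s p (br v (br w u))
            + perm312 s p q (br w (br u v)) = 0) /\
      (forall p q s u v w, homog p u -> homog q v -> homog s w ->
          br (tens u v) w = tens u (br v w) + perm213 q p s (tens v (br u w))).

Definition r_of (br : TV -> TV -> TV) : TV -> TV :=
  lin (fun w => br (tw (take 1 w)) (tw (drop 1 w))).

(* r is an element of End(V(x)V): linear, maps V(x)V into V(x)V.
   (Only its restriction to V(x)V matters; elements of End(V(x)V) are
   compared on V(x)V.) *)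
Definition endo2 (r : TV -> TV) : Prop :=
  linear r /\ forall x, homog 2 x -> homog 2 (r x).

Definition P12 : TV -> TV := perm21 1 1.

Definition skew_r (r : TV -> TV) : Prop :=
  forall x, homog 2 x -> r x = - P12 (r (P12 x)).

Definition r12 (r : TV -> TV) : TV -> TV :=
  lin (fun w => tens (r (tw (take 2 w))) (tw (drop 2 w))).
Definition r23 (r : TV -> TV) : TV -> TV :=
  lin (fun w => tens (tw (take 1 w)) (r (tw (drop 1 w)))).
Definition P23 : TV -> TV :=
  lin (fun w => tw (take 1 w ++ take 1 (drop 2 w) ++ take 1 (drop 1 w))).
Definition r13 (r : TV -> TV) : TV -> TV :=
  fun x => P23 (r12 r (P23 x)).

Definition comm (f g : TV -> TV) : TV -> TV := fun x => f (g x) - g (f x).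

Definition CYBE (r : TV -> TV) : Prop :=
  forall x, homog 3 x ->
    comm (r12 r) (r13 r) x - comm (r23 r) (r12 r) x
      + comm (r13 r) (r23 r) x = 0.

End TensorAlgebra.

(* Main.v *)
Require Import Defs.
From HB Require Import structures.
From mathcomp Require Import all_boot all_algebra.
From mathcomp Require Import finmap.
From mathcomp.multinomials Require Import monalg.
From mathcomp Require Import zify.

Set Implicit Arguments.
Unset Strict Implicit.
Unset Printing Implicit Defensive.
Import GRing.Theory.
Local Open Scope ring_scope.


Arguments Defs.tw : simpl never.
Arguments Defs.lin : simpl never.
Arguments Defs.tens : simpl never.
Arguments Defs.perm21 : simpl never.
Arguments Defs.perm231 : simpl never.
Arguments Defs.perm312 : simpl never.
Arguments Defs.perm213 : simpl never.
Arguments Defs.r_of : simpl never.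
Arguments Defs.P12 : simpl never.
Arguments Defs.P23 : simpl never.
Arguments Defs.r12 : simpl never.
Arguments Defs.r23 : simpl never.
Arguments Defs.r13 : simpl never.
Arguments Defs.comm : simpl never.

Section Inf.
Variables (k : fieldType) (B : choiceType).
Local Notation T := (TV k B).
Local Notation tw := (@Defs.tw k B).
Implicit Types x y z : T.

Definition islin (f : T -> T) := forall (c : k) x y, f (c *: x + y) = c *: f x + f y.

Lemma islin0 (f : T -> T) : islin f -> f 0 = 0.
Proof. move=> h; have := h 1 0 0; rewrite !scale1r addr0 => e.
by apply: (@addrI _ (f 0)); rewrite addr0 -e. Qed.

Lemma islinD (f : T -> T) : islin f -> forall x y, f (x + y) = f x + f y.
Proof. by move=> h x y; have := h 1 x y; rewrite !scale1r. Qed.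

Lemma islinZ (f : T -> T) : islin f -> forall c x, f (c *: x) = c *: f x.
Proof. by move=> h c x; rewrite -[c *: x]addr0 h islin0 // addr0. Qed.

Lemma islinN (f : T -> T) : islin f -> forall x, f (- x) = - f x.
Proof. by move=> h x; rewrite -scaleN1r islinZ // scaleN1r. Qed.

Lemma islinB (f : T -> T) : islin f -> forall x y, f (x - y) = f x - f y.
Proof. by move=> h x y; rewrite islinD // islinN. Qed.

Lemma islin_sum (f : T -> T) (I : Type) (s : seq I) (F : I -> T) : islin f ->
  f (\sum_(i <- s) F i) = \sum_(i <- s) f (F i).
Proof.
move=> h; elim: s => [|a s IH]; first by rewrite !big_nil islin0.
by rewrite !big_cons islinD // IH.
Qed.

Lemma lin_wide (f : seq B -> T) (x : T) (d : {fset seq B}) : (msupp x `<=` d)%fset ->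
  lin f x = \sum_(w <- d) x@_w *: f w.
Proof.
move=> hd; rewrite /lin; apply: big_fset_incl => // w _ hw.
by rewrite mcoeff_outdom // scale0r.
Qed.

Lemma islin_lin (f : seq B -> T) : islin (lin f).
Proof.
move=> c x y.
pose d := (msupp x `|` msupp y)%fset.
have hx : (msupp x `<=` d)%fset by apply: fsubsetUl.
have hy : (msupp y `<=` d)%fset by apply: fsubsetUr.
have hxy : (msupp (c *: x + y) `<=` d)%fset.
  apply: fsubset_trans (msuppD_le _ _) _; apply: fsetUSS => //.
  exact: fsubset_trans (msuppZ_le _ _) _.
rewrite (lin_wide _ hx) (lin_wide _ hy) (lin_wide _ hxy).
rewrite scaler_sumr -big_split /=; apply: eq_bigr => w _.
by rewrite mcoeffD mcoeffZ scalerDl scalerA.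
Qed.

Lemma msupp_tw (w : seq B) : msupp (tw w) = [fset w]%fset.
Proof. by rewrite /Defs.tw msuppU oner_eq0. Qed.

Lemma lin_tw (f : seq B -> T) w : lin f (tw w) = f w.
Proof.
by rewrite /lin msupp_tw big_seq_fset1 /Defs.tw mcoeffUU scale1r.
Qed.

Lemma mkU_scale (c : k) (w : seq B) : << c *g w >> = c *: tw w :> T.
Proof.
apply/malgP => v; rewrite mcoeffZ /Defs.tw !mcoeffU.
by case: (w == v); rewrite ?mulr1 ?mulr0.
Qed.

Lemma lin_twE (x : T) : lin tw x = x.
Proof.
rewrite [RHS]monalgE /lin; apply: eq_bigr => w _; by rewrite mkU_scale.
Qed.

Lemma lin_ext (f : T -> T) (x : T) : islin f -> f x = lin (fun w => f (tw w)) x.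
Proof.
move=> h; rewrite -{1}(lin_twE x) /lin islin_sum //.
by apply: eq_bigr => w _; rewrite islinZ.
Qed.

Lemma eq_lin (f g : seq B -> T) (x : T) : (forall w, w \in msupp x -> f w = g w) -> lin f x = lin g x.
Proof. by move=> h; rewrite /lin; apply: eq_big_seq => w hw; rewrite h. Qed.

Lemma linext (f g : T -> T) : islin f -> islin g -> (forall w, f (tw w) = g (tw w)) ->
  forall x, f x = g x.
Proof.
move=> hf hg h x; rewrite (lin_ext x hf) (lin_ext x hg).
by apply: eq_lin => w _; rewrite h.
Qed.

Lemma hred m (f g : T -> T) (x : T) : islin f -> islin g -> homog m x ->
  (forall w, size w = m -> f (tw w) = g (tw w)) -> f x = g x.
Proof.
move=> hf hg hx h; rewrite (lin_ext x hf) (lin_ext x hg).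
by apply: eq_lin => w hw; rewrite h // hx.
Qed.

Lemma lin_pointD (f g : seq B -> T) (x : T) : lin (fun w => f w + g w) x = lin f x + lin g x.
Proof. by rewrite /lin -big_split; apply: eq_bigr => w _; rewrite scalerDr. Qed.

Lemma lin_pointZ (c : k) (f : seq B -> T) (x : T) : lin (fun w => c *: f w) x = c *: lin f x.
Proof.
rewrite /lin scaler_sumr; apply: eq_bigr => w _; by rewrite !scalerA mulrC.
Qed.

Lemma lin_pointN (f : seq B -> T) (x : T) : lin (fun w => - f w) x = - lin f x.
Proof.
rewrite -scaleN1r -lin_pointZ; apply: eq_lin => w _; by rewrite scaleN1r.
Qed.

Lemma lin_point0 (x : T) : lin (fun _ => 0) x = 0.
Proof. by rewrite /lin big1 // => w _; rewrite scaler0. Qed.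

Lemma lin_comp (h : T -> T) (f : seq B -> T) (x : T) : islin h -> h (lin f x) = lin (fun w => h (f w)) x.
Proof.
move=> hh; rewrite /lin islin_sum //; apply: eq_bigr => w _; by rewrite islinZ.
Qed.

Lemma lin_lin (f g : seq B -> T) (x : T) : lin f (lin g x) = lin (fun w => lin f (g w)) x.
Proof. exact: lin_comp (@islin_lin f). Qed.

Lemma homog0 m : homog m (0 : T).
Proof. by move=> w; rewrite msupp0. Qed.

Lemma homogD m (x y : T) : homog m x -> homog m y -> homog m (x + y).
Proof.
move=> hx hy w /(fsubsetP (msuppD_le _ _)); rewrite inE => /orP [] h;
[exact: hx | exact: hy].
Qed.

Lemma homogZ m (c : k) (x : T) : homog m x -> homog m (c *: x).
Proof. by move=> hx w /(fsubsetP (msuppZ_le _ _)) /hx. Qed.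

Lemma homogN m (x : T) : homog m x -> homog m (- x).
Proof. by move=> hx w; rewrite msuppN => /hx. Qed.

Lemma homog_sum m (I : Type) (s : seq I) (F : I -> T) :
  (forall i, homog m (F i)) -> homog m (\sum_(i <- s) F i).
Proof.
move=> h; elim: s => [|a s IH]; first by rewrite big_nil; apply: homog0.
by rewrite big_cons; apply: homogD.
Qed.

Lemma homog_tw m (w : seq B) : size w = m -> homog m (tw w).
Proof. by move=> <- v; rewrite msupp_tw inE => /eqP ->. Qed.

Lemma homog_sumZ m (f : seq B -> T) (x : T) (s : seq (seq B)) :
  (forall w, w \in s -> homog m (f w)) -> homog m (\sum_(w <- s) x@_w *: f w).
Proof.
elim: s => [|a s IH] h.
  by rewrite big_nil; apply: homog0.
rewrite big_cons; apply: homogD.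
  by apply: homogZ; apply: h; rewrite inE eqxx.
by apply: IH => w hw; apply: h; rewrite inE hw orbT.
Qed.

Lemma homog_lin m (f : seq B -> T) (x : T) : (forall w, w \in msupp x -> homog m (f w)) ->
  homog m (lin f x).
Proof.
move=> h; apply: homog_sumZ => w hw; exact: h.
Qed.
Lemma homog_lin' m (f : seq B -> T) (x : T) : (forall w, homog m (f w)) -> homog m (lin f x).
Proof. by move=> h; apply: homog_lin. Qed.

Lemma tensE (x y : T) : tens x y = lin (fun a => lin (fun b => tw (a ++ b)) y) x.
Proof.
rewrite /tens /lin; apply: eq_bigr => a _; rewrite scaler_sumr.
by apply: eq_bigr => b _; rewrite scalerA.
Qed.

Lemma tens_tw a b : tens (tw a) (tw b) = tw (a ++ b).
Proof. by rewrite tensE !lin_tw. Qed.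

Lemma islin_tensl (y : T) : islin (fun x => tens x y).
Proof. by move=> c x z; rewrite !tensE islin_lin. Qed.

Lemma islin_tensr (x : T) : islin (fun y => tens x y).
Proof.
move=> c y z; rewrite !tensE -lin_pointZ -lin_pointD.
by apply: eq_lin => a _; rewrite islin_lin.
Qed.

Lemma homog_tens m n (x y : T) : homog m x -> homog n y -> homog (m + n) (tens x y).
Proof.
move=> hx hy; rewrite tensE; apply: homog_lin => a /hx ha.
apply: homog_lin => b /hy hb; apply: homog_tw; by rewrite size_cat ha hb.
Qed.

Lemma islin_id : islin (fun x => x). Proof. by []. Qed.
Lemma islin_cst0 : islin (fun _ => 0).
Proof. by move=> c x y; rewrite scaler0 addr0. Qed.
Lemma islin_comp (f g : T -> T) : islin f -> islin g -> islin (fun x => f (g x)).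
Proof. by move=> hf hg c x y; rewrite hg hf. Qed.
Lemma islin_add (f g : T -> T) : islin f -> islin g -> islin (fun x => f x + g x).
Proof.
by move=> hf hg c x y; rewrite hf hg scalerDr addrACA.
Qed.
Lemma islin_opp (f : T -> T) : islin f -> islin (fun x => - f x).
Proof. by move=> hf c x y; rewrite hf opprD scalerN. Qed.
Lemma islin_sub (f g : T -> T) : islin f -> islin g -> islin (fun x => f x - g x).
Proof. by move=> hf hg; apply: islin_add => //; apply: islin_opp. Qed.
Lemma islin_scale (c : k) (f : T -> T) : islin f -> islin (fun x => c *: f x).
Proof. by move=> hf d x y; rewrite hf scalerDr !scalerA mulrC. Qed.


Definition sperm (q a b : nat) : T -> T :=
  lin (fun w => tw (take q w ++ take b (drop (q + a) w) ++ take a (drop q w) ++ drop (q + a + b) w)).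
Lemma islin_sperm q a b : islin (sperm q a b). Proof. exact: islin_lin. Qed.
Lemma sperm_tw q a b w : sperm q a b (tw w) =
  tw (take q w ++ take b (drop (q + a) w) ++ take a (drop q w) ++ drop (q + a + b) w).
Proof. exact: lin_tw. Qed.

Lemma islin_perm21 a b : islin (@perm21 k B a b). Proof. exact: islin_lin. Qed.
Lemma islin_perm231 a b c : islin (@perm231 k B a b c). Proof. exact: islin_lin. Qed.
Lemma islin_perm312 a b c : islin (@perm312 k B a b c). Proof. exact: islin_lin. Qed.
Lemma islin_perm213 a b c : islin (@perm213 k B a b c). Proof. exact: islin_lin. Qed.
Lemma islin_P12 : islin (@P12 k B). Proof. exact: islin_lin. Qed.
Lemma islin_P23 : islin (@P23 k B). Proof. exact: islin_lin. Qed.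
Lemma islin_r12 r : islin (@r12 k B r). Proof. exact: islin_lin. Qed.
Lemma islin_r23 r : islin (@r23 k B r). Proof. exact: islin_lin. Qed.
Lemma islin_r13 r : islin (@r13 k B r).
Proof. apply: (islin_comp islin_P23); apply: islin_comp (islin_r12 r) islin_P23. Qed.
Lemma islin_r_of br : islin (@r_of k B br). Proof. exact: islin_lin. Qed.

Lemma perm21_tw a b w : perm21 a b (tw w) = tw (drop a w ++ take a w).
Proof. exact: lin_tw. Qed.
Lemma perm231_tw a b c w : perm231 a b c (tw w) = tw (drop (a + b) w ++ take (a + b) w).
Proof. exact: lin_tw. Qed.
Lemma perm312_tw a b c w : perm312 a b c (tw w) = tw (drop a w ++ take a w).
Proof. exact: lin_tw. Qed.
Lemma perm213_tw a b c w : perm213 a b c (tw w) =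
  tw (take b (drop a w) ++ take a w ++ drop (a + b) w).
Proof. exact: lin_tw. Qed.
Lemma P12_tw w : P12 (tw w) = tw (drop 1 w ++ take 1 w).
Proof. exact: lin_tw. Qed.
Lemma P23_tw w : P23 (tw w) = tw (take 1 w ++ take 1 (drop 2 w) ++ take 1 (drop 1 w)).
Proof. exact: lin_tw. Qed.
Lemma r12_tw r w : r12 r (tw w) = tens (r (tw (take 2 w))) (tw (drop 2 w)).
Proof. exact: lin_tw. Qed.
Lemma r23_tw r w : r23 r (tw w) = tens (tw (take 1 w)) (r (tw (drop 1 w))).
Proof. exact: lin_tw. Qed.
Lemma r_of_tw br w : r_of br (tw w) = br (tw (take 1 w)) (tw (drop 1 w)).
Proof. exact: lin_tw. Qed.

Lemma tensDl x y z : tens (x + y) z = tens x z + tens y z.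
Proof. exact: (islinD (islin_tensl z)). Qed.
Lemma tensDr x y z : tens z (x + y) = tens z x + tens z y.
Proof. exact: (islinD (islin_tensr z)). Qed.
Lemma tensNl x z : tens (- x) z = - tens x z.
Proof. exact: (islinN (islin_tensl z)). Qed.
Lemma tensNr x z : tens z (- x) = - tens z x.
Proof. exact: (islinN (islin_tensr z)). Qed.
Lemma tensZl (c : k) x z : tens (c *: x) z = c *: tens x z.
Proof. exact: (islinZ (islin_tensl z)). Qed.
Lemma tensZr (c : k) x z : tens z (c *: x) = c *: tens z x.
Proof. exact: (islinZ (islin_tensr z)). Qed.
Lemma tens0l z : tens 0 z = 0.
Proof. exact: (islin0 (islin_tensl z)). Qed.
Lemma tens0r z : tens z 0 = 0.
Proof. exact: (islin0 (islin_tensr z)). Qed.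

Lemma take_addn_cat (a s : seq B) n : take (size a + n) (a ++ s) = a ++ take n s.
Proof. by rewrite takeD take_size_cat // drop_size_cat. Qed.
Lemma drop_addn_cat (a s : seq B) n : drop (size a + n) (a ++ s) = drop n s.
Proof. by rewrite addnC -drop_drop drop_size_cat. Qed.

End Inf.

Ltac slin_base :=
  match goal with
  | |- islin (@lin _ _ _) => exact: islin_lin
  | |- islin (@perm21 _ _ _ _) => exact: islin_perm21
  | |- islin (@perm231 _ _ _ _ _) => exact: islin_perm231
  | |- islin (@perm312 _ _ _ _ _) => exact: islin_perm312
  | |- islin (@perm213 _ _ _ _ _) => exact: islin_perm213
  | |- islin (@sperm _ _ _ _ _) => exact: islin_sperm
  | |- islin (@P12 _ _) => exact: islin_P12
  | |- islin (@P23 _ _) => exact: islin_P23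
  | |- islin (@r12 _ _ _) => exact: islin_r12
  | |- islin (@r23 _ _ _) => exact: islin_r23
  | |- islin (@r13 _ _ _) => exact: islin_r13
  | |- islin (@r_of _ _ _) => exact: islin_r_of
  | |- islin (fun x => @tens _ _ x _) => exact: islin_tensl
  | |- islin (@tens _ _ _) => exact: islin_tensr
  | |- islin (fun x => @tens _ _ _ x) => exact: islin_tensr
  | |- _ => first [ assumption | solve [eauto] ]
  end.

Ltac slin :=
  match goal with
  | |- islin (fun _ => 0) => exact: islin_cst0
  | |- islin (fun z => z) => exact: islin_id
  | |- islin (fun z => @?F z + @?G z) => apply: (islin_add (f:=F) (g:=G)); slin
  | |- islin (fun z => - @?F z) => apply: (islin_opp (f:=F)); slin
  | |- islin (fun z => ?c *: @?F z) => apply: (islin_scale c (f:=F)); slin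
  | |- islin (fun z => ?h (@?F z) ?y) =>
        apply: (islin_comp (f:=fun x => h x y) (g:=F)); [slin_base | slin]
  | |- islin (fun z => ?h (@?F z)) =>
        apply: (islin_comp (f:=h) (g:=F)); [slin_base | slin]
  | |- islin _ => slin_base
  end.

Ltac hred Z hZ :=
  match goal with |- ?L = ?R =>
    let L' := eval pattern Z in L in
    let R' := eval pattern Z in R in
    lazymatch L' with ?f _ => lazymatch R' with ?g _ =>
      apply: (hred (f:=f) (g:=g) _ _ hZ); [slin | slin | cbv beta] end end end.

Lemma eqD (V : zmodType) (a b c d : V) : a = c -> b = d -> (a + b = c + d)%R.
Proof. by move=> -> ->. Qed.

Lemma ac_der (V : zmodType) (a1 a2 r5 c3 c4 r2 r3 r6 : V) :
  (a1 + a2 + (r5 - c3 + (- c4 + r2)) + (c3 + r3 + (c4 + r6)) = a1 + r2 + r3 + (a2 + r5 + r6))%R.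
Proof.
rewrite !addrA [LHS](ACl (1*6*8*2*3*10*(4*7)*(5*9))%AC) /= !addNr !addr0.
by rewrite ?addrA.
Qed.

Lemma eqN (V : zmodType) (a c : V) : a = c -> (- a = - c)%R.
Proof. by move=> ->. Qed.

Lemma ac_cy (V : zmodType) (a b c d e f : V) :
  (a + b + (c - d) + (- e - f) = c - e - (f - a) + (b - d))%R.
Proof. by rewrite opprB !addrA [LHS](ACl (3*5*1*6*2*4)%AC). Qed.

Section Words.
Variable B : choiceType.
Lemma take_cat_size (a s : seq B) : take (size a) (a ++ s) = a.
Proof. exact: take_size_cat. Qed.
Lemma drop_cat_size (a s : seq B) : drop (size a) (a ++ s) = s.
Proof. exact: drop_size_cat. Qed.
Lemma split_word (w : seq B) p q : size w = p + q ->
  exists w1 w2, [/\ w = w1 ++ w2, size w1 = p & size w2 = q].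
Proof.
move=> hw; exists (take p w), (drop p w); rewrite cat_take_drop size_take size_drop hw.
by rewrite addKn; case: ltngtP (leq_addr q p); rewrite ?ltnNge ?leq_addr.
Qed.
Lemma split3 (w : seq B) a b c : size w = (a + b + c)%N ->
  exists w1 w2 w3, [/\ w = w1 ++ w2 ++ w3, size w1 = a, size w2 = b & size w3 = c].
Proof.
move=> hz; have [v [w3 [-> hy h3]]] := split_word hz.
have [w1 [w2 [-> h1 h2]]] := split_word hy.
by exists w1, w2, w3; rewrite catA.
Qed.
Lemma size1 (w : seq B) : size w = 1 -> exists a, w = [:: a].
Proof. by case: w => [|a [|]] //; exists a. Qed.
Lemma size2 (w : seq B) : size w = 2 -> exists a b, w = [:: a; b].
Proof. by case: w => [|a [|b [|]]] //; exists a, b. Qed.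
End Words.

Ltac wsimp := rewrite ?size_cat -?addnA -?catA;
  repeat progress rewrite -?addnA ?take_cat_size ?drop_cat_size ?take_addn_cat ?drop_addn_cat
     ?take_size ?drop_size ?cats0 ?take0 ?drop0 -?catA.

Ltac push0 := repeat progress rewrite ?tensDl ?tensDr ?tensNl ?tensNr ?tens0l ?tens0r
  ?(islinD (islin_perm21 _ _)) ?(islinN (islin_perm21 _ _)) ?(islin0 (islin_perm21 _ _))
  ?(islinD (islin_perm231 _ _ _)) ?(islinN (islin_perm231 _ _ _)) ?(islin0 (islin_perm231 _ _ _))
  ?(islinD (islin_perm312 _ _ _)) ?(islinN (islin_perm312 _ _ _)) ?(islin0 (islin_perm312 _ _ _))
  ?(islinD (islin_perm213 _ _ _)) ?(islinN (islin_perm213 _ _ _)) ?(islin0 (islin_perm213 _ _ _))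
  ?(islinD (@islin_P12 _ _)) ?(islinN (@islin_P12 _ _)) ?(islin0 (@islin_P12 _ _))
  ?(islinD (@islin_P23 _ _)) ?(islinN (@islin_P23 _ _)) ?(islin0 (@islin_P23 _ _))
  ?(islinD (islin_sperm _ _ _)) ?(islinN (islin_sperm _ _ _)) ?(islin0 (islin_sperm _ _ _))
  ?(islinD (islin_r12 _)) ?(islinN (islin_r12 _)) ?(islin0 (islin_r12 _))
  ?(islinD (islin_r23 _)) ?(islinN (islin_r23 _)) ?(islin0 (islin_r23 _))
  ?(islinD (islin_r13 _)) ?(islinN (islin_r13 _)) ?(islin0 (islin_r13 _))
  ?opprK ?oppr0.

Ltac twsimp := repeat progress rewrite ?perm21_tw ?perm231_tw ?perm312_tw ?perm213_tw ?P12_tw ?P23_tw ?sperm_tw ?tens_tw.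

Ltac fin2 hw := let w1 := fresh "w" in let w2 := fresh "w" in
  let e1 := fresh "e" in let e2 := fresh "e" in
  have [w1 [w2 [-> e1 e2]]] := split_word hw;
  twsimp; congr tw; rewrite ?size_cat -?e1 -?e2; wsimp.
Ltac fin3 hw := let w1 := fresh "w" in let w2 := fresh "w" in let w3 := fresh "w" in
  let e1 := fresh "e" in let e2 := fresh "e" in let e3 := fresh "e" in
  rewrite ?addnA in hw;
  have [w1 [w2 [w3 [-> e1 e2 e3]]]] := split3 hw;
  twsimp; congr tw; rewrite ?size_cat -?e1 -?e2 -?e3; wsimp.
Ltac wsimp2 := repeat progress (wsimp; cbn [size take drop cat]).

Section M.
Variables (k : fieldType) (B : choiceType).
Local Notation T := (TV k B).
Local Notation tw := (@Defs.tw k B).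

Lemma M1 (a1 a2 : seq B) q s (W : T) : homog (q + (s + size a1)) W ->
  perm231 q s (size a1 + size a2) (tens W (tw a2)) =
  perm213 (size a2) (size a1) (q + s) (tens (tw a2) (perm231 q s (size a1) W)).
Proof. move=> hW; hred W hW => w hw; by fin3 hw. Qed.

Lemma M2 (a1 a2 : seq B) q s (W : T) : homog (q + (s + size a2)) W ->
  perm231 q s (size a1 + size a2) (sperm q (size a1) s (perm213 (size a1) q (s + size a2) (tens (tw a1) W))) =
  tens (tw a1) (perm231 q s (size a2) W).
Proof. move=> hW; hred W hW => w hw; by fin3 hw. Qed.

Lemma M3 (a1 a2 : seq B) q s (W : T) : homog (s + (size a2 + q)) W ->
  perm312 s (size a1 + size a2) q (perm213 (size a1) s (size a2 + q) (tens (tw a1) W)) =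
  tens (tw a1) (perm312 s (size a2) q W).
Proof. move=> hW; hred W hW => w hw; by fin3 hw. Qed.

Lemma M4 (a1 a2 : seq B) q s (W : T) : homog (s + (size a1 + q)) W ->
  perm312 s (size a1 + size a2) q (sperm s (size a2) (size a1) (perm213 (size a2) s (size a1 + q) (tens (tw a2) W))) =
  perm213 (size a2) (size a1) (q + s) (tens (tw a2) (perm312 s (size a1) q W)).
Proof. move=> hW; hred W hW => w hw; by fin3 hw. Qed.

Lemma X1 (a1 a2 : seq B) q s (Y V : T) : homog (s + size a1) Y -> homog (size a2 + q) V ->
  perm231 q s (size a1 + size a2) (perm213 (s + size a1) q (size a2) (tens Y (perm21 (size a2) q V))) =
  perm312 s (size a1 + size a2) q (tens Y V).
Proof.
move=> hY hV; hred Y hY => y hy; hred V hV => v hv.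
have [y1 [y2 [-> e1 e2]]] := split_word hy.
have [v1 [v2 [-> e3 e4]]] := split_word hv.
by twsimp; congr tw; rewrite ?size_cat -?e1 -?e2 -?e3 -?e4; wsimp.
Qed.

Lemma X2 (a1 a2 : seq B) q s (U Y : T) : homog (size a1 + q) U -> homog (s + size a2) Y ->
  perm231 q s (size a1 + size a2) (sperm q (size a1) s (tens (perm21 (size a1) q U) Y)) =
  perm312 s (size a1 + size a2) q (sperm s (size a2) (size a1) (tens Y U)).
Proof.
move=> hU hY; hred Y hY => y hy; hred U hU => v hv.
have [y1 [y2 [-> e1 e2]]] := split_word hy.
have [v1 [v2 [-> e3 e4]]] := split_word hv.
by twsimp; congr tw; rewrite ?size_cat -?e1 -?e2 -?e3 -?e4; wsimp.
Qed.
End M.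

Section M2.
Variables (k : fieldType) (B : choiceType).
Local Notation T := (TV k B).
Lemma Cyc1 p q s (W : T) : homog (s + (p + q)) W ->
  perm231 q s p (perm231 s p q W) = perm312 s p q W.
Proof. move=> hW; hred W hW => w hw; by fin3 hw. Qed.
Lemma Cyc2 p q s (W : T) : homog (p + (q + s)) W ->
  perm231 q s p (perm312 p q s W) = W.
Proof. move=> hW; hred W hW => w hw; by fin3 hw. Qed.
End M2.


Set Default Proof Using "All".
Section Gen.
Variables (k : fieldType) (B : choiceType).
Local Notation T := (TV k B).
Local Notation tw := (@Defs.tw k B).
Implicit Types x y z : T.

Variable br : T -> T -> T.
Hypothesis hbl : forall y, islin (fun x => br x y).
Hypothesis hbr : forall x, islin (br x).
Hypothesis hbh : forall m n x y, homog m x -> homog n y -> homog (m + n) (br x y).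
Hypothesis hsk : forall m n v w, homog m v -> homog n w -> br w v = - perm21 m n (br v w).
Hypothesis hlb : forall p q s u v w, homog p u -> homog q v -> homog s w ->
  br (tens u v) w = tens u (br v w) + perm213 q p s (tens v (br u w)).

Lemma Hh {m n x y} : homog m x -> homog n y -> homog (m + n) (br x y).
Proof. exact: hbh. Qed.
Lemma Hs {m n v w} : homog m v -> homog n w -> br w v = - perm21 m n (br v w).
Proof. exact: hsk. Qed.
Lemma Hl {p q s u v w} : homog p u -> homog q v -> homog s w ->
  br (tens u v) w = tens u (br v w) + perm213 q p s (tens v (br u w)).
Proof. exact: hlb. Qed.

Lemma brDl x y z : br (x + y) z = br x z + br y z. Proof. exact: (islinD (hbl z)). Qed.
Lemma brNl x z : br (- x) z = - br x z. Proof. exact: (islinN (hbl z)). Qed.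
Lemma br0l z : br 0 z = 0. Proof. exact: (islin0 (hbl z)). Qed.
Lemma brDr x y z : br z (x + y) = br z x + br z y. Proof. exact: (islinD (hbr z)). Qed.
Lemma brNr x z : br z (- x) = - br z x. Proof. exact: (islinN (hbr z)). Qed.
Lemma br0r z : br z 0 = 0. Proof. exact: (islin0 (hbr z)). Qed.

Ltac push := repeat progress (push0; rewrite ?brDl ?brNl ?br0l ?brDr ?brNr ?br0r).

Lemma htw (w : seq B) : homog (size w) (tw w). Proof. exact: homog_tw. Qed.
Arguments htw : clear implicits.
Lemma hbw (a b : seq B) : homog (size a + size b) (br (tw a) (tw b)).
Proof. exact: (Hh (htw a) (htw b)). Qed.
Arguments hbw : clear implicits.

Lemma brnil_l x : br (tw [::]) x = 0.
Proof.
have hT (X : T) : tens (tw [::]) X = X.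
  by apply: (linext (f:=tens (tw [::])) (g:=fun x => x) (islin_tensr _) (@islin_id _ _)) => w; rewrite tens_tw.
have hP s (X : T) : perm213 0 0 s X = X.
  by apply: (linext (f:=perm213 0 0 s) (g:=fun x => x) (islin_perm213 _ _ _) (@islin_id _ _)) => w; rewrite perm213_tw !take0 addn0 drop0.
apply: (linext (f:=br (tw [::])) (g:=fun _ : T => 0 : T) (hbr _) (@islin_cst0 _ _)) => w.
have := Hl (htw [::]) (htw [::]) (htw w); rewrite tens_tw /= hT hP => e.
by apply: (@addrI _ (br (tw [::]) (tw w))); rewrite addr0 -e.
Qed.

Lemma brnil_r x : br x (tw [::]) = 0.
Proof.
apply: (linext (f:=fun x => br x (tw [::])) (g:=fun _ : T => 0 : T) (hbl _) (@islin_cst0 _ _)) => w.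
by rewrite (Hs (htw [::]) (htw w)) brnil_l; push.
Qed.

Lemma RLw (a b c : seq B) : br (tw c) (tw (a ++ b)) =
  tens (br (tw c) (tw a)) (tw b) + perm213 (size a) (size c) (size b) (tens (tw a) (br (tw c) (tw b))).
Proof.
rewrite -tens_tw (Hs (homog_tens (htw a) (htw b)) (htw c)).
rewrite (Hl (htw a) (htw b) (htw c)).
rewrite (Hs (htw c) (htw b)) (Hs (htw c) (htw a)); push.
rewrite opprD !opprK addrC; apply: eqD.
- hred (br (tw c) (tw a)) (hbw c a) => w hw.
  have [w1 [w2 [-> h1 h2]]] := split_word hw.
  by twsimp; congr tw; rewrite -h1 -h2; wsimp.
- hred (br (tw c) (tw b)) (hbw c b) => w hw.
  have [w1 [w2 [-> h1 h2]]] := split_word hw.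
  by twsimp; congr tw; rewrite -h1 -h2; wsimp.
Qed.

Lemma RL p q s u v w : homog p u -> homog q v -> homog s w ->
  br w (tens u v) = tens (br w u) v + perm213 p s q (tens u (br w v)).
Proof.
move=> hu hv hw.
hred u hu => a ha; hred v hv => b hb; hred w hw => c hc.
by rewrite tens_tw RLw ha hb hc.
Qed.


Lemma Nat a b c (bb : seq B) Z : homog (a + b + c)%N Z ->
  br (tw bb) (perm213 a b c Z) = sperm (size bb) a b (br (tw bb) Z).
Proof.
move=> hZ; hred Z hZ => z hz.
have [z1 [z2 [z3 [-> h1 h2 h3]]]] := split3 hz.
rewrite -h1 -h2 -h3 perm213_tw; wsimp.
rewrite RLw (RLw z1 z3) (RLw z1 (z2 ++ z3)) (RLw z2 z3); push.
rewrite addrCA; apply: eqD; last apply: eqD.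
- hred (br (tw bb) (tw z1)) (hbw bb z1) => w hw.
  have [w1 [w2 [-> e1 e2]]] := split_word hw.
  by twsimp; congr tw; rewrite ?size_cat -?e1 -?e2; wsimp.
- hred (br (tw bb) (tw z2)) (hbw bb z2) => w hw.
  have [w1 [w2 [-> e1 e2]]] := split_word hw.
  by twsimp; congr tw; rewrite ?size_cat -?e1 -?e2; wsimp.
- hred (br (tw bb) (tw z3)) (hbw bb z3) => w hw.
  have [w1 [w2 [-> e1 e2]]] := split_word hw.
  by twsimp; congr tw; rewrite ?size_cat -?e1 -?e2; wsimp.
Qed.


Definition Jw (a b c : seq B) : T :=
  br (tw a) (br (tw b) (tw c))
  + perm231 (size b) (size c) (size a) (br (tw b) (br (tw c) (tw a)))
  + perm312 (size c) (size a) (size b) (br (tw c) (br (tw a) (tw b))).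

Lemma Der (a1 a2 b c : seq B) : Jw (a1 ++ a2) b c =
  tens (tw a1) (Jw a2 b c)
  + perm213 (size a2) (size a1) (size b + size c) (tens (tw a2) (Jw a1 b c)).
Proof.
rewrite /Jw size_cat -!tens_tw.
rewrite (Hl (htw a1) (htw a2) (hbw b c)) (Hl (htw a1) (htw a2) (htw b)).
rewrite (RL (htw a1) (htw a2) (htw c)); push.
rewrite (RL (hbw c a1) (htw a2) (htw b)).
have h1 := homog_tens (htw a1) (hbw c a2); rewrite addnA in h1.
rewrite (Nat b h1) (RL (htw a1) (hbw c a2) (htw b)).
rewrite (RL (htw a1) (hbw a2 b) (htw c)).
have h2 := homog_tens (htw a2) (hbw a1 b); rewrite addnA in h2.
rewrite (Nat c h2) (RL (htw a2) (hbw a1 b) (htw c)).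
rewrite (Hs (htw a2) (htw b)) (Hs (htw a1) (htw b)); push.
rewrite (M1 a2 (Hh (htw b) (hbw c a1))).
rewrite (M2 a1 (Hh (htw b) (hbw c a2))).
rewrite (M3 a1 (Hh (htw c) (hbw a2 b))).
rewrite (M4 a2 (Hh (htw c) (hbw a1 b))).
rewrite (X1 (hbw c a1) (hbw a2 b)) (X2 (hbw a1 b) (hbw c a2)).
exact: ac_der.
Qed.

Lemma Cyc (a b c : seq B) : Jw a b c = perm231 (size b) (size c) (size a) (Jw b c a).
Proof.
rewrite /Jw; push.
rewrite (Cyc1 (Hh (htw c) (hbw a b))) (Cyc2 (Hh (htw a) (hbw b c))).
by rewrite [RHS]addrC addrA.
Qed.

Lemma Jnil1 b c : Jw [::] b c = 0.
Proof. by rewrite /Jw !brnil_l brnil_r; push; rewrite !addr0. Qed.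
Lemma Jnil2 a c : Jw a [::] c = 0.
Proof. by rewrite /Jw !brnil_l brnil_r; push; rewrite !addr0. Qed.
Lemma Jnil3 a b : Jw a b [::] = 0.
Proof. by rewrite /Jw !brnil_l brnil_r; push; rewrite !addr0. Qed.

Lemma Jzero : (forall x y z : B, Jw [:: x] [:: y] [:: z] = 0) -> forall a b c, Jw a b c = 0.
Proof.
move=> hb a b c.
move: (leqnn (size a + size b + size c)).
move: {2}(size a + size b + size c)%N => n.
elim: n a b c => [|n IH] a b c hn.
  by case: a hn => [|x a] //= _; rewrite Jnil1.
have hsp : forall a0 b0 c0, (size a0 + size b0 + size c0 <= n.+1)%N -> (1 < size a0)%N ->
    Jw a0 b0 c0 = 0.
  move=> [|x a'] b0 c0 //= h h2.
  rewrite -cat1s Der (IH a') ?(IH [:: x]) /=; push; rewrite ?addr0 //; lia.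
case: a hn => [|x [|x' a']] hn; first by rewrite Jnil1.
- case: b hn => [|y [|y' b']] hn; first by rewrite Jnil2.
  + case: c hn => [|z [|z' c']] hn; first by rewrite Jnil3.
    * exact: hb.
    * rewrite Cyc Cyc hsp /=; push => //; move: hn => /=; lia.
  + rewrite Cyc hsp /=; push => //; move: hn => /=; lia.
- apply: hsp => //.
Qed.

Section Letters.
Variable r : T -> T.
Hypothesis hrl : islin r.
Hypothesis hr2 : forall x, homog 2 x -> homog 2 (r x).
Hypothesis hrs : forall x, homog 2 x -> r x = - P12 (r (P12 x)).
Hypothesis hr : forall a b : B, br (tw [:: a]) (tw [:: b]) = r (tw [:: a; b]).

Lemma hr2w (a b : B) : homog 2 (r (tw [:: a; b])). Proof. exact: hr2 (htw [:: a; b]). Qed.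
Arguments hr2w : clear implicits.
Lemma rskw (a b : B) : r (tw [:: b; a]) = - P12 (r (tw [:: a; b])).
Proof. by rewrite (hrs (htw [:: b; a])) P12_tw. Qed.

Lemma LA (x y z : B) : br (tw [:: x]) (br (tw [:: y]) (tw [:: z])) =
  r12 r (r23 r (tw [:: x; y; z])) + r13 r (r23 r (tw [:: x; y; z])).
Proof.
rewrite hr r23_tw /=.
hred (r (tw [:: y; z])) (hr2w y z) => w hw.
have [c [d ->]] := size2 hw.
rewrite (RLw [:: c] [:: d]) !hr tens_tw /= /r13 r12_tw P23_tw /= r12_tw /=.
apply: eqD => //.
hred (r (tw [:: x; d])) (hr2w x d) => v hv.
have [e [f ->]] := size2 hv.
by twsimp.
Qed.

Lemma LE2 (x y z : B) :
  perm231 1 1 1 (r12 r (r23 r (tw [:: y; z; x])) + r13 r (r23 r (tw [:: y; z; x]))) =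
  r12 r (r13 r (tw [:: x; y; z])) - r23 r (r13 r (tw [:: x; y; z])).
Proof.
rewrite r23_tw /= rskw /r13 P23_tw /= r12_tw /=.
hred (r (tw [:: x; z])) (hr2w x z) => w hw.
have [c [d ->]] := size2 hw.
push; twsimp; rewrite !r12_tw !r23_tw /= (rskw y c).
do 2 (push; twsimp; rewrite ?r12_tw ?r23_tw /=).
rewrite [RHS]addrC; apply: eqD; apply: eqN.
- hred (r (tw [:: y; d])) (hr2w y d) => v hv.
  by have [e [f ->]] := size2 hv; twsimp.
- hred (r (tw [:: y; c])) (hr2w y c) => v hv.
  by have [e [f ->]] := size2 hv; twsimp.
Qed.

Lemma LE3 (x y z : B) :
  perm312 1 1 1 (r12 r (r23 r (tw [:: z; x; y])) + r13 r (r23 r (tw [:: z; x; y]))) =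
  - r13 r (r12 r (tw [:: x; y; z])) - r23 r (r12 r (tw [:: x; y; z])).
Proof.
rewrite r23_tw r12_tw /= /r13.
hred (r (tw [:: x; y])) (hr2w x y) => w hw.
have [c [d ->]] := size2 hw.
push; twsimp; rewrite !r12_tw !r23_tw /= (rskw c z) (rskw d z).
do 2 (push; twsimp; rewrite ?r12_tw ?r23_tw /=).
apply: eqD; apply: eqN.
- hred (r (tw [:: c; z])) (hr2w c z) => v hv.
  by have [e [f ->]] := size2 hv; twsimp.
- hred (r (tw [:: d; z])) (hr2w d z) => v hv.
  by have [e [f ->]] := size2 hv; twsimp.
Qed.

Definition CY (x : T) := comm (r12 r) (r13 r) x - comm (r23 r) (r12 r) x
      + comm (r13 r) (r23 r) x.

Lemma Jletters (x y z : B) : Jw [:: x] [:: y] [:: z] = CY (tw [:: x; y; z]).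
Proof.
rewrite /Jw /= LA LA LA LE2 LE3 /CY /comm.
exact: ac_cy.
Qed.
End Letters.
End Gen.


Section SumL.
Variables (k : fieldType) (B : choiceType).
Local Notation T := (TV k B).
Local Notation tw := (@Defs.tw k B).

Fixpoint sumL (f : seq B -> B -> seq B -> T) (p a : seq B) : T :=
  match a with [::] => 0 | x :: a' => f p x a' + sumL f (rcons p x) a' end.

Lemma sumL_ind (P : T -> Prop) f p a : P 0 -> (forall u v, P u -> P v -> P (u + v)) ->
  (forall p' x a', p' ++ x :: a' = p ++ a -> P (f p' x a')) -> P (sumL f p a).
Proof.
move=> h0 hD; elim: a p => [|x a IH] p h //=.
apply: hD; first exact: h.
apply: IH => p' y a' e; apply: h; by rewrite e cat_rcons.
Qed.

Lemma eq_sumL f g p a : (forall p' x a', p' ++ x :: a' = p ++ a -> f p' x a' = g p' x a') ->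
  sumL f p a = sumL g p a.
Proof.
elim: a p => [|x a IH] p h //=.
rewrite h // (IH (rcons p x)) // => p' y a' e; apply: h; by rewrite e cat_rcons.
Qed.

Lemma sumL_cat f p a1 a2 : sumL f p (a1 ++ a2) =
  sumL (fun p' x a' => f p' x (a' ++ a2)) p a1 + sumL f (p ++ a1) a2.
Proof.
elim: a1 p => [|x a1 IH] p /=; first by rewrite add0r cats0.
by rewrite IH -cat_rcons addrA.
Qed.

Lemma sumL_lin (h : T -> T) f p a : islin h ->
  h (sumL f p a) = sumL (fun p' x a' => h (f p' x a')) p a.
Proof.
move=> hh; elim: a p => [|x a IH] p /=; first exact: islin0.
by rewrite islinD // IH.
Qed.

Lemma sumL_shift (h : T -> T) f g u p a : islin h ->
  (forall p' x a', f (u ++ p') x a' = h (g p' x a')) ->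
  sumL f (u ++ p) a = h (sumL g p a).
Proof.
move=> hh e; elim: a p => [|x a IH] p /=; first by rewrite islin0.
by rewrite islinD // e -IH rcons_cat.
Qed.

Lemma sumL_add f g p a : sumL (fun p' x a' => f p' x a' + g p' x a') p a = sumL f p a + sumL g p a.
Proof.
elim: a p => [|x a IH] p /=; first by rewrite addr0.
by rewrite IH addrACA.
Qed.

Lemma sumL_swap (G : seq B -> B -> seq B -> seq B -> B -> seq B -> T) p0 q0 a b :
  sumL (fun p x a' => sumL (G p x a') q0 b) p0 a =
  sumL (fun q y b' => sumL (fun p x a' => G p x a' q y b') p0 a) q0 b.
Proof.
elim: a p0 => [|x a IH] p0 /=.
  by elim: b q0 => [|y b IHb] q0 //=; rewrite -IHb addr0.
by rewrite IH -sumL_add.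
Qed.
End SumL.

Set Default Proof Using "All".
Section Cons.
Variables (k : fieldType) (B : choiceType).
Local Notation T := (TV k B).
Local Notation tw := (@Defs.tw k B).
Variable r : T -> T.
Hypothesis hrl : islin r.
Hypothesis hr2 : forall x : T, homog 2 x -> homog 2 (r x).
Hypothesis hrs : forall x : T, homog 2 x -> r x = - P12 (r (P12 x)).

Definition term (p : seq B) (x : B) (a' q : seq B) (y : B) (b' : seq B) : T :=
  lin (fun cd => tw (p ++ take 1 cd ++ a' ++ q ++ drop 1 cd ++ b')) (r (tw [:: x; y])).
Definition brw (a b : seq B) : T :=
  sumL (fun p x a' => sumL (fun q y b' => term p x a' q y b') [::] b) [::] a.
Definition brC (u v : T) : T := lin (fun a => lin (fun b => brw a b) v) u.

Lemma hr2c (a b : B) : homog 2 (r (tw [:: a; b])). Proof. exact: hr2 (homog_tw _). Qed.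
Arguments hr2c : clear implicits.
Lemma msupp2 (a b : B) w : w \in msupp (r (tw [:: a; b])) -> exists c d, w = [:: c; d].
Proof. by move=> /(hr2c a b) /size2. Qed.

Lemma brC_tw a b : brC (tw a) (tw b) = brw a b.
Proof. by rewrite /brC !lin_tw. Qed.

Lemma brC_l (y : T) : islin (fun x => brC x y). Proof. exact: islin_lin. Qed.
Lemma brC_r (x : T) : islin (brC x).
Proof.
move=> c y z; rewrite /brC -lin_pointZ -lin_pointD.
by apply: eq_lin => a _; rewrite islin_lin.
Qed.

#[local] Hint Resolve brC_l brC_r : core.

Lemma brw_homog a b : homog (size a + size b) (brw a b).
Proof.
apply: sumL_ind; [exact: homog0 | exact: homogD|] => p x a' ea.
apply: sumL_ind; [exact: homog0 | exact: homogD|] => q y b' eb.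
apply: homog_lin => w /msupp2 [c [d ->]]; apply: homog_tw.
move: ea eb; rewrite /= => <- <-; rewrite !size_cat /= !size_cat /=; lia.
Qed.

Lemma brC_homog m n (x y : T) : homog m x -> homog n y -> homog (m + n) (brC x y).
Proof.
move=> hx hy; apply: homog_lin => a /hx ha; apply: homog_lin => b /hy hb.
by rewrite -ha -hb; apply: brw_homog.
Qed.

Lemma brC_letters (a b : B) : brC (tw [:: a]) (tw [:: b]) = r (tw [:: a; b]).
Proof.
rewrite brC_tw /brw /= !addr0 /term -[RHS]lin_twE; apply: eq_lin => w _.
by rewrite /= cats0 cat_take_drop.
Qed.

Lemma term_skew p x a' q y b' : term p x a' q y b' =
  - perm21 (size (q ++ y :: b')) (size (p ++ x :: a')) (term q y b' p x a').
Proof.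
rewrite /term (lin_comp _ _ (islin_perm21 _ _)).
rewrite [X in - X](eq_lin (g := fun cd => tw (p ++ drop 1 cd ++ a' ++ q ++ take 1 cd ++ b'))); last first.
  move=> w /msupp2 [c [d ->]] /=; rewrite perm21_tw; congr tw.
  by wsimp2.
rewrite (hrs (homog_tw (erefl : size [:: y; x] = 2))) P12_tw /=.
rewrite (islinN (islin_lin _)) opprK.
hred (r (tw [:: x; y])) (hr2c x y) => w hw.
have [c [d ->]] := size2 hw.
by rewrite P12_tw !lin_tw.
Qed.
Lemma brw_skew a b : brw a b = - perm21 (size b) (size a) (brw b a).
Proof.
have hlin : islin (fun z : T => - perm21 (size b) (size a) z) by slin.
have E1 : brw a b = sumL (fun p x a' => sumL (fun q y b' =>
    - perm21 (size b) (size a) (term q y b' p x a')) [::] b) [::] a.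
  apply: eq_sumL => p x a' ea; apply: eq_sumL => q y b' eb.
  by move: ea eb => /= ea eb; rewrite term_skew -ea -eb.
rewrite E1 sumL_swap /brw (sumL_lin _ _ _ hlin); apply: eq_sumL => q y b' _.
by rewrite (sumL_lin _ _ _ hlin).
Qed.

Lemma brw_leib a1 a2 b : brw (a1 ++ a2) b =
  tens (tw a1) (brw a2 b) + perm213 (size a2) (size a1) (size b) (tens (tw a2) (brw a1 b)).
Proof.
rewrite /brw sumL_cat addrC; apply: eqD.
  rewrite (_ : [::] ++ a1 = a1 ++ [::]); last by rewrite cats0.
  apply: sumL_shift; first exact: islin_tensr.
  move=> p' x a'; rewrite (sumL_lin _ _ _ (islin_tensr _)); apply: eq_sumL => q y b' _.
  rewrite /term (lin_comp _ _ (islin_tensr _)); apply: eq_lin => w _.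
  by rewrite tens_tw -!catA.
have hlin : islin (fun z : T => perm213 (size a2) (size a1) (size b) (tens (tw a2) z)) by slin.
rewrite (sumL_lin _ _ _ hlin); apply: eq_sumL => p x a' ea.
rewrite (sumL_lin _ _ _ hlin); apply: eq_sumL => q y b' eb.
rewrite /term (lin_comp _ _ hlin); apply: eq_lin => w /msupp2 [c [d ->]] /=.
rewrite tens_tw perm213_tw; congr tw; move: ea => /= <-.
by wsimp2.
Qed.

Lemma brC_skew m n v w : homog m v -> homog n w -> brC w v = - perm21 m n (brC v w).
Proof.
move=> hv hw; hred v hv => b hb; hred w hw => a ha.
by rewrite !brC_tw -hb -ha brw_skew.
Qed.

Lemma brC_leib p q s u v w : homog p u -> homog q v -> homog s w ->
  brC (tens u v) w = tens u (brC v w) + perm213 q p s (tens v (brC u w)).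
Proof.
move=> hu hv hw; hred u hu => a1 h1; hred v hv => a2 h2; hred w hw => b hb.
by rewrite tens_tw !brC_tw brw_leib h1 h2 hb.
Qed.

Lemma brC_rof x : homog 2 x -> r_of brC x = r x.
Proof.
move=> hx; hred x hx => w hw; have [a [b ->]] := size2 hw.
by rewrite r_of_tw /= brC_letters.
Qed.
End Cons.


Lemma size3 (B : choiceType) (w : seq B) : size w = 3 -> exists a b c, w = [:: a; b; c].
Proof. by case: w => [|a [|b [|c [|]]]] //; exists a, b, c. Qed.

Section Main.
Variables (k : fieldType) (B : choiceType).
Local Notation T := (TV k B).
Local Notation tw := (@Defs.tw k B).

Lemma part1 (br : T -> T -> T) : twisted_poisson br ->
  [/\ endo2 (r_of br), skew_r (r_of br) & CYBE (r_of br)].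
Proof.
move=> [H1 [H2 [H3 [H4 [H5 H6]]]]].
have hbl : forall y, islin (fun x => br x y) by move=> y c x z; apply: H1.
have hbr : forall x, islin (br x) by move=> x c y z; apply: H2.
have hrl : islin (r_of br) by exact: islin_r_of.
have hr2 : forall x, homog 2 x -> homog 2 (r_of br x).
  move=> x hx; apply: homog_lin => w /hx hw; have [a [b ->]] := size2 hw.
  exact: (H3 1 1 _ _ (homog_tw (erefl : size [:: a] = 1)) (homog_tw (erefl : size [:: b] = 1))).
have hrs : skew_r (r_of br).
  move=> x hx; hred x hx => w hw; have [a [b ->]] := size2 hw.
  rewrite P12_tw /= !r_of_tw /=.
  exact: (H4 1 1 _ _ (homog_tw (erefl : size [:: b] = 1)) (homog_tw (erefl : size [:: a] = 1))).
split => //.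
move=> x hx; rewrite /comm; hred x hx => w hw; have [a [b [c ->]]] := size3 hw.
have hr : forall a b : B, br (tw [:: a]) (tw [:: b]) = r_of br (tw [:: a; b]).
  by move=> a0 b0; rewrite r_of_tw.
have := Jletters hbl hbr H3 H4 H6 hrl hr2 hrs hr a b c.
rewrite /CY /comm => <-; rewrite /Jw /=.
exact: (H5 1 1 1 _ _ _ (homog_tw (erefl : size [:: a] = 1)) (homog_tw (erefl : size [:: b] = 1))
   (homog_tw (erefl : size [:: c] = 1))).
Qed.

Lemma part2 (br1 br2 : T -> T -> T) : twisted_poisson br1 -> twisted_poisson br2 ->
  (forall x, homog 2 x -> r_of br1 x = r_of br2 x) -> forall u v, br1 u v = br2 u v.
Proof.
move=> [H1 [H2 [H3 [H4 [H5 H6]]]]] [G1 [G2 [G3 [G4 [G5 G6]]]]] hr.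
have hbl : forall y, islin (fun x => br1 x y) by move=> y c x z; apply: H1.
have hbr : forall x, islin (br1 x) by move=> x c y z; apply: H2.
have gbl : forall y, islin (fun x => br2 x y) by move=> y c x z; apply: G1.
have gbr : forall x, islin (br2 x) by move=> x c y z; apply: G2.
have hl : forall a b : B, br1 (tw [:: a]) (tw [:: b]) = br2 (tw [:: a]) (tw [:: b]).
  move=> a b; have := hr _ (homog_tw (erefl : size [:: a; b] = 2)).
  by rewrite !r_of_tw.
suff hw : forall a b, br1 (tw a) (tw b) = br2 (tw a) (tw b).
  move=> u v; apply: (linext (f := fun x => br1 x v) (g := fun x => br2 x v)) => // a.
  by apply: (linext (f := br1 (tw a)) (g := br2 (tw a))).
have hsize : forall n a b, (size a + size b <= n)%N -> br1 (tw a) (tw b) = br2 (tw a) (tw b).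
  elim=> [|n IH] a b hn.
    by case: a hn => [|x a] // _; rewrite (brnil_l hbl hbr H3 H4 H6) (brnil_l gbl gbr G3 G4 G6).
  have hsp : forall a0 b0, (size a0 + size b0 <= n.+1)%N -> (1 < size a0)%N ->
      br1 (tw a0) (tw b0) = br2 (tw a0) (tw b0).
    move=> [|x a'] b0 //= h h2.
    rewrite -cat1s -tens_tw.
    rewrite (H6 _ _ _ _ _ _ (homog_tw (erefl : size [:: x] = 1)) (homog_tw (erefl _)) (homog_tw (erefl _))).
    rewrite (G6 _ _ _ _ _ _ (homog_tw (erefl : size [:: x] = 1)) (homog_tw (erefl _)) (homog_tw (erefl _))).
    rewrite (IH a') ?(IH [:: x]) //= ; lia.
  case: a hn => [|x [|x' a']] hn.
  - by rewrite (brnil_l hbl hbr H3 H4 H6) (brnil_l gbl gbr G3 G4 G6).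
  - case: b hn => [|y [|y' b']] hn.
    + by rewrite (brnil_r hbl hbr H3 H4 H6) (brnil_r gbl gbr G3 G4 G6).
    + exact: hl.
    + rewrite (H4 _ _ _ _ (homog_tw (erefl _)) (homog_tw (erefl : size [:: x] = 1))).
      rewrite (G4 _ _ _ _ (homog_tw (erefl _)) (homog_tw (erefl : size [:: x] = 1))).
      rewrite hsp //; move: hn => /=; lia.
  - by apply: hsp.
by move=> a b; apply: (hsize (size a + size b)).
Qed.

Lemma part3 (r : T -> T) : endo2 r -> skew_r r -> CYBE r ->
  exists br : T -> T -> T, twisted_poisson br /\ forall x, homog 2 x -> r_of br x = r x.
Proof.
move=> [hlin hr2] hrs hcy.
have hrl : islin r by move=> c x y; apply: hlin.
pose br := brC r.
have hbl : forall y, islin (fun x => br x y) by move=> y; exact: brC_l.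
have hbr : forall x, islin (br x) := brC_r hrl hr2 hrs.
have hbh := brC_homog hrl hr2 hrs.
have hsk := brC_skew hrl hr2 hrs.
have hlb := brC_leib hrl hr2 hrs.
exists br; split; last exact: brC_rof hrl hr2 hrs.
split; first by move=> c x y z; apply: hbl.
split; first by move=> c x y z; apply: hbr.
do 2 (split => //).
split => //.
move=> p q s u v w hu hv hw.
hred u hu => a ha; hred v hv => b hb; hred w hw => c hc.
rewrite -ha -hb -hc.
apply: (Jzero hbl hbr hbh hsk hlb) => x y z.
rewrite (Jletters hbl hbr hbh hsk hlb hrl hr2 hrs (brC_letters hrl hr2 hrs)).
exact: (hcy _ (homog_tw (erefl : size [:: x; y; z] = 3))).
Qed.

End Main.


Theorem theorem1p1 (k : fieldType) (hk : [pchar k]%R =i pred0) (B : choiceType) :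
  (* the assignment lands in skew solutions of the CYBE in End(V(x)V) *)
  (forall br : TV k B -> TV k B -> TV k B, twisted_poisson br ->
     [/\ endo2 (r_of br), skew_r (r_of br) & CYBE (r_of br)]) /\
  (* injectivity *)
  (forall br1 br2 : TV k B -> TV k B -> TV k B,
     twisted_poisson br1 -> twisted_poisson br2 ->
     (forall x, homog 2 x -> r_of br1 x = r_of br2 x) ->
     forall u v, br1 u v = br2 u v) /\
  (* surjectivity *)
  (forall r : TV k B -> TV k B, endo2 r -> skew_r r -> CYBE r ->
     exists br : TV k B -> TV k B -> TV k B,
       twisted_poisson br /\ forall x, homog 2 x -> r_of br x = r x).
Proof.
split; first by move=> br; apply: part1.
split; first by move=> br1 br2; apply: part2.
by move=> r; apply: part3.
Qed.
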